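(* Let $\mathcal{R}=(G_0,e\to R)$ be an expanding replacement system with limit space $X$. Then: (1) the interior of each cell of $X$ contains at least one gluing vertex and at least one regular point; (2) if $p$ lies in the interior of a cell $C(e')$, then every point of $\Omega$ mapping to $p$ has $e'$ as a prefix; (3) if $e'$ is a prefix of $f'$, then $C(e')\supseteq C(f')$; (4) if neither of $e',f'$ is a prefix of the other, then the interiors of $C(e')$ and $C(f')$ are disjoint.
   Context: A graph means a finite directed multigraph (loops, multiple edges allowed). A replacement system $\mathcal{R}=(G_0,e\to R)$: $G_0$ a graph, $e$ a non-loop directed edge from $v$ to $w$, $R$ a graph containing $v,w$ (initial and terminal vertices; other vertices interior). Replacing an edge $\varepsilon$ means deleting it and gluing in a copy of $R$ with initial/terminal vertices identified with those of $\varepsilon$; new edges are $\varepsilon\zeta$ ($\zeta\in E(R)$), new vertices $\varepsilon\nu$ ($\nu$ interior). The full expansion $G_n$ is obtained from $G_{n-1}$ by replacing every edge; edges of $G_n$ are words $\varepsilon_0\cdots\varepsilon_n$ and $V(G_0)\subset V(G_1)\subset\cdots$. $\mathcal{R}$ is expanding if neither $G_0$ nor $R$ has isolated vertices, the initial and terminal vertices of $R$ are not adjacent, and $R$ has at least three vertices and two edges. $\Omega=E(G_0)\times E(R)^{\mathbb{N}}$; $\varepsilon_0\varepsilon_1\cdots\sim\varepsilon'_0\varepsilon'_1\cdots$ iff for all $n$ the edges $\varepsilon_0\cdots\varepsilon_n$, $\varepsilon'_0\cdots\varepsilon'_n$ of $G_n$ share a vertex; $X=\Omega/\sim$ with quotient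 map $q$. Gluing vertices are elements of $\bigcup_n V(G_n)$; a sequence represents gluing vertex $u$ if $\varepsilon_0\cdots\varepsilon_n$ is incident on $u$ for all large $n$, and $u$ is identified with the point of $X$ that its representatives map to. Points of $X$ that are not gluing vertices are regular points. For an edge $e'=\varepsilon_0\cdots\varepsilon_n$ of $G_n$, the cell $C(e')$ is $q$ of the set of sequences with prefix $e'$; its boundary points are the endpoints of $e'$ (as gluing vertices), and its interior is $C(e')$ minus its boundary points. *)

(* Defs.v *)
From mathcomp Require Import all_boot.
From Stdlib Require Import Relations.Relation_Operators.
Set Implicit Arguments. Unset Strict Implicit. Unset Printing Implicit Defensive.

(* G0 has vertices V0, edges E0 with
   source/target maps; R has vertices VR, edges ER, and distinguished
   initial vertex iv and terminal vertex tv (the endpoints v,w of the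
   non-loop edge e, hence iv <> tv). *)
Record repl_system := ReplSystem {
  V0 : finType; E0 : finType; src0 : E0 -> V0; tgt0 : E0 -> V0;
  VR : finType; ER : finType; srcR : ER -> VR; tgtR : ER -> VR;
  iv : VR; tv : VR; iv_neq_tv : iv != tv }.

Section RS.
Variable RS : repl_system.

Definition expanding : Prop :=
  (forall v : V0 RS, exists e, src0 e = v \/ tgt0 e = v) /\
  (forall v : VR RS, exists z, srcR z = v \/ tgtR z = v) /\
  (forall z : ER RS, ~ ((srcR z = iv RS /\ tgtR z = tv RS) \/
                        (srcR z = tv RS /\ tgtR z = iv RS))) /\
  3 <= #|VR RS| /\ 2 <= #|ER RS|.

(* Edges of G_n are words e0 e1 ... en : (e0, [:: e1; ...; en]). *)
Definition edge := (E0 RS * seq (ER RS))%type.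

(* Gluing vertices: vertices of G0, and vertices  eps nu  where eps is an
   edge of some G_n and nu an interior vertex of R. *)
Inductive gvert :=
  | Base of V0 RS
  | Int of E0 RS & seq (ER RS) & VR RS.

Definition is_gluing_vertex (u : gvert) : Prop :=
  match u with
  | Base _ => True
  | Int _ _ nu => nu <> iv RS /\ nu <> tv RS
  end.

Fixpoint ends_rev (e0 : E0 RS) (r : seq (ER RS)) : gvert * gvert :=
  match r with
  | [::] => (Base (src0 e0), Base (tgt0 e0))
  | z :: r' =>
      let ab := ends_rev e0 r' in
      let vert nu := if nu == iv RS then ab.1
                     else if nu == tv RS then ab.2
                     else Int e0 (rev r') nu in
      (vert (srcR z), vert (tgtR z))
  end.

Definition ends (e' : edge) : gvert * gvert := ends_rev e'.1 (rev e'.2).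
Definition esrc (e' : edge) := (ends e').1.
Definition etgt (e' : edge) := (ends e').2.
Definition incident (e' : edge) (u : gvert) : Prop := u = esrc e' \/ u = etgt e'.

Definition share_vertex (e' f' : edge) : Prop :=
  exists u, incident e' u /\ incident f' u.

Definition Omega := (E0 RS * (nat -> ER RS))%type.

(* the prefix eps0 ... epsn, an edge of G_n *)
Definition pref (w : Omega) (n : nat) : edge := (w.1, mkseq w.2 n).

Definition has_prefix (w : Omega) (e' : edge) : Prop :=
  pref w (size e'.2) = e'.

Definition edge_prefix (e' f' : edge) : Prop :=
  e'.1 = f'.1 /\ prefix e'.2 f'.2.

Definition sim (w w' : Omega) : Prop :=
  forall n, share_vertex (pref w n) (pref w' n).

(* X = Omega / ~ (quotient by the equivalence relation generated by ~);
   a point of X is represented by its equivalence class. *)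
Definition eqv : Omega -> Omega -> Prop := clos_refl_sym_trans Omega sim.
Definition point := (Omega -> Prop).
Definition q (w : Omega) : point := fun w' => eqv w w'.
Definition is_point (p : point) : Prop := exists w, p = q w.

Definition represents (w : Omega) (u : gvert) : Prop :=
  exists N, forall n, N <= n -> incident (pref w n) u.

Definition vertex_point (u : gvert) (p : point) : Prop :=
  exists w, represents w u /\ q w = p.

Definition gluing_point (p : point) : Prop :=
  exists u, is_gluing_vertex u /\ vertex_point u p.

Definition regular_point (p : point) : Prop :=
  is_point p /\ ~ gluing_point p.

Definition cell (e' : edge) (p : point) : Prop :=
  exists w, has_prefix w e' /\ q w = p.

Definition cell_boundary (e' : edge) (p : point) : Prop :=
  vertex_point (esrc e') p \/ vertex_point (etgt e') p.

Definition cell_interior (e' : edge) (p : point) : Prop :=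
  cell e' p /\ ~ cell_boundary e' p.

End RS.

(* Main.v *)
Require Import Defs.
From mathcomp Require Import all_boot.
From Stdlib Require Import Relations.Relation_Operators.
From Stdlib Require Import Classical FunctionalExtensionality PropExtensionality.
Set Implicit Arguments. Unset Strict Implicit. Unset Printing Implicit Defensive.

Definition vert (RS : repl_system) (f0 : E0 RS) (s : seq (ER RS)) (nu : VR RS) : gvert RS :=
  if nu == iv RS then esrc (f0, s) else if nu == tv RS then etgt (f0, s) else Int f0 s nu.

Definition lvl (RS : repl_system) (x : gvert RS) : nat :=
  match x with Base _ => 0 | Int _ r _ => (size r).+1 end.

Lemma ends_rcons (RS : repl_system) (f0 : E0 RS) s z :
  esrc (f0, rcons s z) = vert f0 s (srcR z) /\ etgt (f0, rcons s z) = vert f0 s (tgtR z).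
Proof. by rewrite /esrc /etgt /ends /vert /= rev_rcons /= revK. Qed.

Lemma vert_cases (RS : repl_system) (f0 : E0 RS) s nu :
  vert f0 s nu = esrc (f0, s) \/ vert f0 s nu = etgt (f0, s) \/
  (vert f0 s nu = Int f0 s nu /\ nu != iv RS /\ nu != tv RS).
Proof.
rewrite /vert; case: ifP => H1; first by left.
case: ifP => H2; first by right; left.
by right; right; split.
Qed.

Lemma lvl_ends (RS : repl_system) (f0 : E0 RS) s :
  lvl (esrc (f0, s)) <= size s /\ lvl (etgt (f0, s)) <= size s.
Proof.
elim/last_ind: s => [|s z [IH1 IH2]]; first by [].
have H : forall nu, lvl (vert f0 s nu) <= size (rcons s z).
  move=> nu; rewrite size_rcons.
  case: (vert_cases f0 s nu) => [->|[->|[-> _]]] //=; apply: leqW => //.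
by case: (ends_rcons f0 s z) => -> ->; rewrite !H.
Qed.

Lemma lvl_incident (RS : repl_system) (e : edge RS) x : incident e x -> lvl x <= size e.2.
Proof. case: e => f0 s; case: (lvl_ends f0 s) => H1 H2 [->|->] //. Qed.

Lemma incident_child (RS : repl_system) (f0 : E0 RS) s z x :
  incident (f0, rcons s z) x -> incident (f0, s) x \/ exists nu, x = Int f0 s nu.
Proof.
case: (ends_rcons f0 s z) => E1 E2.
have H : forall nu, x = vert f0 s nu -> incident (f0, s) x \/ exists nu, x = Int f0 s nu.
  move=> nu ->; case: (vert_cases f0 s nu) => [->|[->|[-> _]]].
  - by left; left. - by left; right. - by right; exists nu.
by rewrite /incident E1 E2 => [[|]]; apply: H.
Qed.

Lemma vert_old (RS : repl_system) (f0 : E0 RS) s nu :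
  lvl (vert f0 s nu) <= size s -> nu = iv RS \/ nu = tv RS.
Proof.
rewrite /vert; case: eqP => [->|_]; first by left.
case: eqP => [->|_]; first by right.
by rewrite /= ltnn.
Qed.

Lemma two_old (RS : repl_system) (Hexp : expanding RS) (f0 : E0 RS) s z x y :
  incident (f0, rcons s z) x -> incident (f0, rcons s z) y ->
  lvl x <= size s -> lvl y <= size s -> x = y.
Proof.
case: Hexp => _ [_ [Hna _]].
case: (ends_rcons f0 s z) => E1 E2.
have key : esrc (f0, rcons s z) = etgt (f0, rcons s z) \/
           (lvl (esrc (f0, rcons s z)) > size s \/ lvl (etgt (f0, rcons s z)) > size s).
  rewrite E1 E2.
  case: (leqP (lvl (vert f0 s (srcR z))) (size s)) => Ha; last by right; left.
  case: (leqP (lvl (vert f0 s (tgtR z))) (size s)) => Hb; last by right; right.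
  left; case: (vert_old Ha) => Sa; case: (vert_old Hb) => Sb.
  - by rewrite Sa Sb.
  - by exfalso; apply: (Hna z); left.
  - by exfalso; apply: (Hna z); right.
  - by rewrite Sa Sb.
rewrite /incident => Hx Hy Lx Ly.
case: key => [Heq|[Hl|Hl]].
- by case: Hx => Hx; case: Hy => Hy; subst x y.
- case: Hx => Hx; first by rewrite -Hx ltnNge Lx in Hl.
  case: Hy => Hy; first by rewrite -Hy ltnNge Ly in Hl.
  by subst x y.
- case: Hx => Hx; last by rewrite -Hx ltnNge Lx in Hl.
  case: Hy => Hy; last by rewrite -Hy ltnNge Ly in Hl.
  by subst x y.
Qed.

Lemma pref_S (RS : repl_system) (w : Omega RS) n :
  pref w n.+1 = (w.1, rcons (mkseq w.2 n) (w.2 n)).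
Proof. by rewrite /pref mkseqS. Qed.

Lemma lvl_pref (RS : repl_system) (w : Omega RS) n x :
  incident (pref w n) x -> lvl x <= n.
Proof. by move/lvl_incident; rewrite /= size_mkseq. Qed.

Lemma sim_sym (RS : repl_system) (a b : Omega RS) : sim a b -> sim b a.
Proof. by move=> H n; case: (H n) => u [H1 H2]; exists u. Qed.

Lemma sim_repr (RS : repl_system) (Hexp : expanding RS) (v v' : Omega RS) u :
  sim v v' -> represents v u -> represents v' u.
Proof.
move=> Hsim [N HN]; exists N => n Hn; apply: NNPP => Hnot.
have [y [Hcy Hc'y]] := Hsim n.+1.
have Hu1 : incident (pref v n.+1) u by apply: HN; apply: leqW.
have Lu : lvl u <= n by apply: (lvl_pref (HN n Hn)).
rewrite !pref_S in Hcy Hc'y Hu1.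
case: (incident_child Hcy) => [Hay | [nu Ey]].
- have Ly : lvl y <= n by apply: (lvl_pref Hay).
  have Euy : u = y by apply: (two_old Hexp Hu1 Hcy); rewrite size_mkseq.
  case: (incident_child Hc'y) => [Ha'y | [nu' Ey']].
  + by apply: Hnot; rewrite Euy.
  + by move: Ly; rewrite Ey' /= size_mkseq ltnn.
- case: (incident_child Hc'y) => [Ha'y | [nu' Ey']].
  + by move: (lvl_pref Ha'y); rewrite Ey /= size_mkseq ltnn.
  + rewrite Ey in Ey'; case: Ey' => E1 E2 _.
    apply: Hnot; rewrite /pref -E1 -E2; exact: HN.
Qed.

Lemma eqv_repr (RS : repl_system) (Hexp : expanding RS) (a b : Omega RS) :
  eqv a b -> forall u, represents a u <-> represents b u.
Proof.
elim => {a b} [a b Hs|a|a b _ IH|a b c _ IH1 _ IH2] u.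
- split; [exact: sim_repr | exact/sim_repr/sim_sym].
- by [].
- by rewrite IH.
- by rewrite IH1 IH2.
Qed.

Lemma repr_uniq (RS : repl_system) (Hexp : expanding RS) (w : Omega RS) u u' :
  represents w u -> represents w u' -> u = u'.
Proof.
move=> [N HN] [N' HN'].
set n := maxn N N'.
have h1 : N <= n by apply: leq_maxl.
have h2 : N' <= n by apply: leq_maxr.
have A1 := HN n.+1 (leqW h1). have A2 := HN' n.+1 (leqW h2).
have L1 := lvl_pref (HN n h1). have L2 := lvl_pref (HN' n h2).
rewrite pref_S in A1 A2.
by apply: (two_old Hexp A1 A2); rewrite size_mkseq.
Qed.

Lemma q_eqv (RS : repl_system) (a b : Omega RS) : eqv a b -> q a = q b.
Proof.
move=> H; apply: functional_extensionality => w; apply: propositional_extensionality.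
rewrite /q; split => H'.
- apply: rst_trans H'; exact: rst_sym.
- exact: rst_trans H H'.
Qed.

Lemma eqv_of_q (RS : repl_system) (a b : Omega RS) : q a = q b -> eqv a b.
Proof. move=> H; have := equal_f H b; rewrite /q => ->; exact: rst_refl. Qed.

Lemma incident_take (RS : repl_system) (f0 : E0 RS) s x k :
  incident (f0, s) x -> k <= size s ->
  incident (f0, take k s) x \/ exists j nu, k <= j < size s /\ x = Int f0 (take j s) nu.
Proof.
elim/last_ind: s x k => [|s z IH] x k Hx Hk.
  by move: Hk; rewrite leqn0 => /eqP ->; left.
rewrite size_rcons in Hk.
case: (ltngtP k (size s).+1) => Hk'; last first.
  by left; rewrite take_oversize // size_rcons Hk'.
  by rewrite ltnNge Hk in Hk'.
have Hks : k <= size s by [].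
have Ht : forall j, j <= size s -> take j (rcons s z) = take j s.
  by move=> j Hj; rewrite -cats1 takel_cat.
case: (incident_child Hx) => [H | [nu E]].
- case: (IH x k H Hks) => [H' | [j [nu [Hj E]]]].
  + by left; rewrite Ht.
  + right; exists j, nu; case/andP: Hj => Hj1 Hj2.
    rewrite Ht ?(ltnW Hj2) // E; split => //.
    by rewrite Hj1 size_rcons ltnS ltnW.
- right; exists (size s), nu; rewrite Ht // take_size; split => //.
  by rewrite Hks size_rcons ltnSn.
Qed.

Lemma incident_down (RS : repl_system) (f0 : E0 RS) s x m :
  incident (f0, s) x -> lvl x <= m -> m <= size s -> incident (f0, take m s) x.
Proof.
move=> Hx Hl Hm; case: (incident_take Hx Hm) => [//|[j [nu [/andP [Hj1 Hj2] E]]]].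
by move: Hl; rewrite E /= size_takel ?(ltnW Hj2) // ltnNge Hj1.
Qed.

Lemma take_mkseq (T : Type) (f : nat -> T) k n : k <= n -> take k (mkseq f n) = mkseq f k.
Proof. by move=> H; rewrite /mkseq -map_take take_iota (minn_idPl H). Qed.

Lemma sim_boundary (RS : repl_system) (v v' : Omega RS) (e' : edge RS) :
  sim v v' -> has_prefix v e' -> ~ has_prefix v' e' ->
  represents v (esrc e') \/ represents v (etgt e').
Proof.
case: e' => e0 t; rewrite /has_prefix /pref /= => Hsim [E0v Et] Hn'.
set k := size t.
have step1 : forall n, k <= n -> exists x, incident (e0, t) x /\ incident (pref v n) x.
  move=> n Hn; case: (Hsim n) => x [Hx Hx'].
  have Hs : k <= size (mkseq v.2 n) by rewrite size_mkseq.
  case: (incident_take Hx Hs) => [H1 | [j [nu [/andP [Hj1 Hj2] Ex]]]].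
  + by exists x; split => //; move: H1; rewrite take_mkseq // Et -E0v.
  + exfalso.
    have Hs' : k <= size (mkseq v'.2 n) by rewrite size_mkseq.
    case: (incident_take Hx' Hs') => [H1' | [j' [nu' [/andP [Hj1' Hj2'] Ex']]]].
    * move: (lvl_incident H1'); rewrite Ex /= (size_takel (ltnW Hj2)) (size_takel Hs').
      by rewrite ltnNge Hj1.
    * rewrite size_mkseq in Hj2; rewrite size_mkseq in Hj2'.
      rewrite Ex in Ex'; case: Ex' => F1 F2 _.
      rewrite (take_mkseq _ (ltnW Hj2)) (take_mkseq _ (ltnW Hj2')) in F2.
      have Ejj : j = j' by move: (congr1 size F2); rewrite !size_mkseq.
      subst j'.
      apply: Hn'; congr pair; first by rewrite -F1.
      by rewrite -/k -(take_mkseq v'.2 Hj1) -F2 take_mkseq.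
have Lk : forall x, incident (e0, t) x -> lvl x <= k by move=> y /lvl_incident.
case: (classic (forall n, k <= n -> incident (pref v n) (esrc (e0, t)))) => Hall.
  by left; exists k.
right; case: (not_all_ex_not _ _ Hall) => n0 Hn0.
have Hk0 : k <= n0 by apply: NNPP => Hk0; apply: Hn0 => Hk0'; exfalso; exact: Hk0.
have Hn0' : ~ incident (pref v n0) (esrc (e0, t)) by move=> H; apply: Hn0.
exists n0 => n Hn; case: (step1 n (leq_trans Hk0 Hn)) => x [[Ex|Ex] Hx].
- exfalso; apply: Hn0'; subst x.
  have := incident_down Hx (leq_trans (Lk _ (or_introl erefl)) Hk0).
  by rewrite size_mkseq take_mkseq //; apply.
- by rewrite -Ex.
Qed.

Lemma interior_prefix (RS : repl_system) (Hexp : expanding RS) (e' : edge RS) p :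
  cell_interior e' p -> forall w : Omega RS, q w = p -> has_prefix w e'.
Proof.
case=> [[w0 [Hw0 Eq0]] Hnb] w Ew.
have Heqv : eqv w0 w by apply: eqv_of_q; rewrite Eq0 Ew.
suff H : forall a b, eqv a b -> q a = p -> (has_prefix a e' <-> has_prefix b e').
  by apply/(H w0 w Heqv Eq0).
move=> a0 b0 H0; elim: H0 => {Heqv} [a b Hs|a|a b Hba IH|a b c Hab IH1 _ IH2] Hq.
- split => H; apply: NNPP => Hn.
  + by case: (sim_boundary Hs H Hn) => R; apply: Hnb; [left|right]; exists a.
  + have Hqb : q b = p by rewrite -Hq; apply: q_eqv; apply: rst_sym; apply: rst_step.
    by case: (sim_boundary (sim_sym Hs) H Hn) => R; apply: Hnb; [left|right]; exists b.
- by [].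
- have Hqa : q a = p.
    by rewrite -Hq; apply: q_eqv; first [exact: Hba | apply: rst_sym; exact: Hba].
  by rewrite IH.
  have Hqb : q b = p by rewrite -Hq; symmetry; apply: q_eqv.
  by rewrite IH1 // IH2.
Qed.

Lemma prefix_cell (RS : repl_system) (e' f' : edge RS) :
  edge_prefix e' f' -> forall p, cell f' p -> cell e' p.
Proof.
case: e' f' => e0 t [f0 t'] [/= E1 Hp] p [w [Hw Ew]]; exists w; split => //.
move: Hw; rewrite /has_prefix /pref /= => [[Ew1 Ew2]].
have Hs := size_prefix Hp.
move: Hp; rewrite prefixE => /eqP Ht.
rewrite /has_prefix /pref /=; congr pair; first by rewrite Ew1 E1.
by rewrite -(take_mkseq w.2 Hs) Ew2 Ht.
Qed.

Lemma two_prefixes (RS : repl_system) (w : Omega RS) (e' f' : edge RS) :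
  has_prefix w e' -> has_prefix w f' -> size e'.2 <= size f'.2 -> edge_prefix e' f'.
Proof.
case: e' f' => e0 t [f0 t']; rewrite /has_prefix /pref /= => [[E1 E2]] [F1 F2] Hs.
split; first by rewrite -E1 -F1.
by rewrite prefixE -F2 take_mkseq // E2.
Qed.

Lemma lvl_vert_int (RS : repl_system) (f0 : E0 RS) s nu :
  nu != iv RS -> nu != tv RS -> vert f0 s nu = Int f0 s nu.
Proof. by rewrite /vert => /negbTE -> /negbTE ->. Qed.

Lemma vert_iv (RS : repl_system) (f0 : E0 RS) s : vert f0 s (iv RS) = esrc (f0, s).
Proof. by rewrite /vert eqxx. Qed.

Lemma vert_tv (RS : repl_system) (f0 : E0 RS) s : vert f0 s (tv RS) = etgt (f0, s).
Proof. by rewrite /vert eq_sym (negbTE (iv_neq_tv RS)) eqxx. Qed.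

Lemma two_step (RS : repl_system) (f0 : E0 RS) s z0 z2 nu x :
  nu != iv RS -> nu != tv RS -> (srcR z0 = nu \/ tgtR z0 = nu) ->
  (if (srcR z0 == iv RS) || (srcR z0 == tv RS)
   then (srcR z2 != iv RS /\ tgtR z2 != iv RS)
   else (srcR z2 != tv RS /\ tgtR z2 != tv RS)) ->
  incident (f0, rcons (rcons s z0) z2) x -> size s < lvl x.
Proof.
move=> Hi Ht Hz0 Hz2.
have key : forall y, (y = srcR z2 \/ y = tgtR z2) -> size s < lvl (vert f0 (rcons s z0) y).
  move=> y Hy; rewrite /vert; case: eqP => Hyi.
  - case: (ends_rcons f0 s z0) => -> _.
    move: Hz2; case: ifP => Hc [H1 H2].
      by exfalso; case: Hy => Hy; [move: H1|move: H2]; rewrite -Hy Hyi eqxx.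
    move/negbT: Hc; rewrite negb_or => /andP [Hc1 Hc2].
    by rewrite lvl_vert_int.
  - case: eqP => Hyt.
    + case: (ends_rcons f0 s z0) => _ ->.
      move: Hz2; case: ifP => Hc [H1 H2]; last first.
        by exfalso; case: Hy => Hy; [move: H1|move: H2]; rewrite -Hy Hyt eqxx.
      have Hsrc : srcR z0 <> nu.
        by move=> E; move: Hc; rewrite E (negbTE Hi) (negbTE Ht).
      case: Hz0 => // ->; by rewrite lvl_vert_int.
    + by rewrite /= size_rcons.
case: (ends_rcons f0 (rcons s z0) z2) => E1 E2.
by rewrite /incident E1 E2 => [[->|->]]; apply: key; [left|right].
Qed.

Definition ext (RS : repl_system) (t : seq (ER RS)) (g : nat -> ER RS) : nat -> ER RS :=
  fun i => if i < size t then nth (g 0) t i else g (i - size t).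

Lemma mkseq_ext (RS : repl_system) (t : seq (ER RS)) g m :
  mkseq (ext t g) (size t + m) = t ++ mkseq g m.
Proof.
apply: (@eq_from_nth _ (g 0)); first by rewrite size_mkseq size_cat size_mkseq.
move=> i; rewrite size_mkseq => Hi.
rewrite nth_mkseq // /ext nth_cat; case: ifP => // Hit.
rewrite nth_mkseq //; rewrite -(ltn_add2l (size t)) subnKC //.
by rewrite leqNgt Hit.
Qed.

Lemma pref_ext (RS : repl_system) (e0 : E0 RS) t g m :
  pref (e0, ext t g) (size t + m) = (e0, t ++ mkseq g m).
Proof. by rewrite /pref mkseq_ext. Qed.

Lemma has_prefix_ext (RS : repl_system) (e0 : E0 RS) t g k :
  k <= size t -> has_prefix (e0, ext t g) (e0, take k t).
Proof.
move=> Hk; rewrite /has_prefix /pref /= size_takel //.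
by rewrite -(take_mkseq _ Hk) -(addn0 (size t)) mkseq_ext cats0.
Qed.

Fixpoint fstate (RS : repl_system) (zI zT : ER RS) (b0 : bool) (k : nat) : bool :=
  match k with
  | 0 => b0
  | k'.+1 => if fstate zI zT b0 k' then srcR zI == iv RS else srcR zT == tv RS
  end.

Lemma follow (RS : repl_system) (Hexp : expanding RS) (f0 : E0 RS) s (b : bool) x :
  x = (if b then esrc (f0, s) else etgt (f0, s)) ->
  exists g, forall k, incident (f0, s ++ mkseq g k) x.
Proof.
case: Hexp => _ [Hni _].
case: (Hni (iv RS)) => zI HzI; case: (Hni (tv RS)) => zT HzT.
move=> Hx.
pose g k := if fstate zI zT b k then zI else zT.
have inv : forall k, x = (if fstate zI zT b k then esrc (f0, s ++ mkseq g k)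
                          else etgt (f0, s ++ mkseq g k)).
  elim => [|k IH]; first by rewrite /= cats0.
  rewrite mkseqS -rcons_cat /=.
  case: (ends_rcons f0 (s ++ mkseq g k) (g k)) => -> ->.
  rewrite /g; case: (fstate zI zT b k) IH => IH.
  - case: eqP => E; first by rewrite E vert_iv.
    by case: HzI => // ->; rewrite vert_iv.
  - case: eqP => E; first by rewrite E vert_tv.
    by case: HzT => // ->; rewrite vert_tv.
exists g => k; have := inv k; rewrite /incident.
by case: (fstate zI zT b k) => ->; [left|right].
Qed.

Lemma interior_vertex (RS : repl_system) (Hexp : expanding RS) :
  exists nu : VR RS, nu != iv RS /\ nu != tv RS.
Proof.
case: Hexp => _ [_ [_ [H3 _]]].
apply: NNPP => Hn.
have Hall : forall nu : VR RS, nu \in [:: iv RS; tv RS].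
  move=> nu; rewrite !inE; apply: NNPP => H; apply: Hn; exists nu.
  by move: H; case: eqP; case: eqP.
have : #|VR RS| <= #|[:: iv RS; tv RS]|.
  apply: subset_leq_card; apply/subsetP => y _; exact: Hall.
move=> Hc; have := leq_trans Hc (card_size _); rewrite /=.
by move=> H2; move: (leq_trans H3 H2).
Qed.

Lemma not_repr_not_gluing (RS : repl_system) (Hexp : expanding RS) (w : Omega RS) u :
  vertex_point u (q w) -> represents w u.
Proof.
case=> w'' [Hr Eq]; have := eqv_of_q Eq => He.
by apply/(eqv_repr Hexp He).
Qed.

Lemma gluing_interior (RS : repl_system) (Hexp : expanding RS) (e' : edge RS) :
  exists p, cell_interior e' p /\ gluing_point p.
Proof.
case: e' => e0 t.
have [nu [Hi Ht]] := interior_vertex Hexp.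
have [_ [Hni _]] := Hexp.
case: (Hni nu) => z0 Hz0.
set u := Int e0 t nu.
have Hu : u = (if srcR z0 == nu then esrc (e0, rcons t z0) else etgt (e0, rcons t z0)).
  case: (ends_rcons e0 t z0) => -> ->.
  case: eqP => E; first by rewrite E lvl_vert_int.
  by case: Hz0 => // ->; rewrite lvl_vert_int.
have [g Hg] := follow Hexp Hu.
set w : Omega RS := (e0, ext (rcons t z0) g).
have Hrep : represents w u.
  exists (size (rcons t z0)) => n Hn.
  by rewrite -(subnKC Hn) pref_ext.
have Hpre : has_prefix w (e0, t).
  have := @has_prefix_ext RS e0 (rcons t z0) g (size t) ltac:(by rewrite size_rcons).
  by rewrite -cats1 take_size_cat // cats1.
exists (q w); split; last first.
  exists u; split; first by split; apply/eqP.
  by exists w.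
split; first by exists w.
case=> Hb; have := not_repr_not_gluing Hexp Hb => Hr;
  have := repr_uniq Hexp Hr Hrep => E.
- by have := lvl_incident (or_introl (erefl (esrc (e0, t)))); rewrite E /= ltnn.
- by have := lvl_incident (or_intror (erefl (etgt (e0, t)))); rewrite E /= ltnn.
Qed.

Lemma regular_interior (RS : repl_system) (Hexp : expanding RS) (e' : edge RS) :
  exists p, cell_interior e' p /\ regular_point p.
Proof.
case: e' => e0 t.
have [nu [Hi Ht]] := interior_vertex Hexp.
have [_ [Hni [Hna _]]] := Hexp.
case: (Hni nu) => z0 Hz0.
case: (Hni (iv RS)) => zI HzI; case: (Hni (tv RS)) => zT HzT.
have ivtv := iv_neq_tv RS.
have HzI' : srcR zI != tv RS /\ tgtR zI != tv RS.
  case: HzI => E; split; apply/eqP => E'.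
  - by move: ivtv; rewrite -E E' eqxx.
  - by apply: (Hna zI); left; split.
  - by apply: (Hna zI); right; split.
  - by move: ivtv; rewrite -E E' eqxx.
have HzT' : srcR zT != iv RS /\ tgtR zT != iv RS.
  case: HzT => E; split; apply/eqP => E'.
  - by move: ivtv; rewrite -E E' eqxx.
  - by apply: (Hna zT); right; split.
  - by apply: (Hna zT); left; split.
  - by move: ivtv; rewrite -E E' eqxx.
pose z2 := if (srcR z0 == iv RS) || (srcR z0 == tv RS) then zT else zI.
have Hz2 : (if (srcR z0 == iv RS) || (srcR z0 == tv RS)
   then (srcR z2 != iv RS /\ tgtR z2 != iv RS)
   else (srcR z2 != tv RS /\ tgtR z2 != tv RS)).
  by rewrite /z2; case: ((srcR z0 == iv RS) || (srcR z0 == tv RS)).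
pose g i := if odd i then z2 else z0.
set w : Omega RS := (e0, ext t g).
have Hp2 : forall m, pref w (size t + (m.*2).+2) = (e0, rcons (rcons (t ++ mkseq g m.*2) z0) z2).
  move=> m; rewrite pref_ext !mkseqS /g odd_double /= !rcons_cat.
  by rewrite odd_double.
have Hnrep : forall u, ~ represents w u.
  move=> u [N HN].
  have HNn : N <= size t + N.*2 by rewrite -addnn addnA leq_addl.
  have L := lvl_pref (HN _ HNn).
  have HNn2 : N <= size t + (N.*2).+2.
    by apply: (leq_trans HNn); rewrite leq_add2l; apply: leqW; apply: leqW.
  have H2 := HN _ HNn2.
  rewrite Hp2 in H2.
  have := two_step Hi Ht Hz0 Hz2 H2; rewrite size_cat size_mkseq.
  by rewrite ltnNge L.
have Hnv : forall u, ~ vertex_point u (q w).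
  by move=> u Hv; apply: (Hnrep u); apply: not_repr_not_gluing Hv.
have Hpre : has_prefix w (e0, t).
  by have := @has_prefix_ext RS e0 t g (size t) (leqnn _); rewrite take_size.
exists (q w); split.
  split; first by exists w.
  by case=> Hb; [apply: (Hnv _ Hb) | apply: (Hnv _ Hb)].
split; first by exists w.
by case=> u [_ Hv]; apply: (Hnv u Hv).
Qed.

Theorem proposition1p23 (RS : repl_system) (Hexp : expanding RS) :
  (forall e' : edge RS,
      (exists p, cell_interior e' p /\ gluing_point p) /\
      (exists p, cell_interior e' p /\ regular_point p)) /\
  (forall (e' : edge RS) (p : point RS), cell_interior e' p ->
      forall w : Omega RS, q w = p -> has_prefix w e') /\
  (forall e' f' : edge RS, edge_prefix e' f' ->
      forall p, cell f' p -> cell e' p) /\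
  (forall e' f' : edge RS, ~ edge_prefix e' f' -> ~ edge_prefix f' e' ->
      forall p, ~ (cell_interior e' p /\ cell_interior f' p)).
Proof.
split; first by move=> e'; split; [apply: gluing_interior | apply: regular_interior].
split; first by move=> e' p Hi w Hw; apply: (interior_prefix Hexp Hi Hw).
split; first exact: prefix_cell.
move=> e' f' Hn1 Hn2 p [Hie Hif].
have Hie' := Hie; case: Hie' => [[w [Hw Ew]] _].
have Hwf := interior_prefix Hexp Hif Ew.
case: (leqP (size e'.2) (size f'.2)) => Hs.
- by apply: Hn1; apply: (two_prefixes Hw Hwf).
- by apply: Hn2; apply: (two_prefixes Hwf Hw); apply: ltnW.
Qed.
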